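(* Let $\langle X,<\rangle$ be an infinite linear ordering and $r$ a positive integer. Then there is $Y\subseteq X$ with $|Y|=|X|$ such that for any $y_1<y_2$ in $Y$ there are elements $x^{(k)}_1,\dots,x^{(k)}_r\in X$ for $k=1,2,3$ (at least $r$ of each) with \[x^{(1)}_1,\dots,x^{(1)}_r<y_1<x^{(2)}_1,\dots,x^{(2)}_r<y_2<x^{(3)}_1,\dots,x^{(3)}_r.\] *)

(* Defs.v *)
From HB Require Import structures.
From mathcomp Require Import all_boot all_order.
From mathcomp Require Import boolp classical_sets functions cardinality.
Set Implicit Arguments. Unset Strict Implicit. Unset Printing Implicit Defensive.

(* Main.v *)
Require Import Defs.
From HB Require Import structures.
From mathcomp Require Import all_boot all_order.
From mathcomp Require Import boolp classical_sets functions cardinality.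
Import Order.TTheory.
Local Open Scope classical_set_scope.
Local Open Scope card_scope.

Lemma inf_seq (T : Type) (A : set T) : infinite_set A ->
  exists e : nat -> T, (forall n, A (e n)) /\ injective e.
Proof.
elim/Ppointed: T => T in A *.
  by move=> Ainf; exfalso; apply: Ainf; rewrite [A]empty_eq0; exact: finite_set0.
move=> /infiniteP /pcard_leP [g].
have [e eA einj] : exists2 f : nat -> T, set_fun setT A f & set_inj setT f.
  by apply/injfunPex; exact: (squash g).
exists e; split; first by move=> n; exact: eA.
by move=> m n h; apply: einj; rewrite ?in_setT.
Qed.

Lemma absorb (T : Type) (A : set T) : infinite_set A ->
  exists f : T -> nat -> T, (forall x n, A x -> A (f x n)) /\
    (forall x n x' n', A x -> A x' -> f x n = f x' n' -> x = x' /\ n = n').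
Proof.
elim/Ppointed: T => T in A *.
  by move=> Ainf; exfalso; apply: Ainf; rewrite [A]empty_eq0; exact: finite_set0.
move=> Ainf.
pose S (G : set (T * nat * T)) := [set x | exists n y, G (x, n, y)].
pose P (G : set (T * nat * T)) :=
  [/\ forall x n y, G (x, n, y) -> A x /\ S G y,
      forall x, S G x -> forall n, exists y, G (x, n, y),
      forall x n y y', G (x, n, y) -> G (x, n, y') -> y = y' &
      forall x n x' n' y, G (x, n, y) -> G (x', n', y) -> x = x' /\ n = n'].
have [G [PG Gmax]] : exists G, P G /\ forall B, G `<` B -> ~ P B.
  apply: Zorn_bigcup => F FP Ftot.
  split.
  - move=> x n y [X FX Xt]; have [h1 _ _ _] := FP X FX.
    have [Ax [m [z Xz]]] := h1 _ _ _ Xt; split => //.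
    by exists m, z, X.
  - move=> x [m [z [X FX Xt]]] n; have [_ h2 _ _] := FP X FX.
    have [y Xy] := h2 x (ex_intro _ m (ex_intro _ z Xt)) n.
    by exists y, X.
  - move=> x n y y' [X1 F1 X1t] [X2 F2 X2t].
    have [s|s] := Ftot _ _ F1 F2.
      by have [_ _ h3 _] := FP X2 F2; apply: h3 (s _ X1t) X2t.
    by have [_ _ h3 _] := FP X1 F1; apply: h3 X1t (s _ X2t).
  - move=> x n x' n' y [X1 F1 X1t] [X2 F2 X2t].
    have [s|s] := Ftot _ _ F1 F2.
      by have [_ _ _ h4] := FP X2 F2; apply: h4 (s _ X1t) X2t.
    by have [_ _ _ h4] := FP X1 F1; apply: h4 X1t (s _ X2t).
have [h1 h2 h3 h4] := PG.
have SA : S G `<=` A by move=> x [n [y /h1 []]].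
have finF : finite_set (A `\` S G).
  apply: contrapT => /inf_seq [e [eA einj]].
  pose G' := G `|` [set t | exists i n, t = (e i, n, e (pickle (i, n)))].
  have nSe i : ~ S G (e i) by have [] := eA i.
  have pinj : injective (@pickle (nat * nat)%type) := pcan_inj (@pickleK _).
  apply: (Gmax G').
    split; first by move=> t Gt; left.
    move=> sub; have : G' (e 0, 0, e (pickle (0, 0))) by right; exists 0, 0.
    move=> /sub Gt; apply: (nSe 0); by exists 0, (e (pickle (0, 0))).
  have SG' x : S G' x -> S G x \/ exists i, x = e i.
    move=> [n [y [Gt|[i [m eq]]]]]; first by left; exists n, y.
    by right; exists i; case: eq.
  split.
  - move=> x n y [Gt|[i [m [? ? ?]]]]; subst.
      have [Ax [m [z Gz]]] := h1 _ _ _ Gt; split => //; exists m, z; by left.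
    split; first by have [] := eA i.
    by exists 0, (e (pickle (pickle (i, m), 0))); right; exists (pickle (i, m)), 0.
  - move=> x /SG' [Sx n|[i -> n]].
      by have [y Gy] := h2 x Sx n; exists y; left.
    by exists (e (pickle (i, n))); right; exists i, n.
  - move=> x n y y' [Gt|[i [m [ex ? ?]]]] [Gt'|[i' [m' [ex' ? ?]]]]; subst.
    + exact: h3 Gt Gt'.
    + by exfalso; apply: (nSe i'); do 2 eexists; eassumption.
    + by exfalso; apply: (nSe i); do 2 eexists; eassumption.
    + by match goal with H : e _ = e _ |- _ => move/einj: H => -> end.
  - move=> x n x' n' y [Gt|[i [m [? ? ey]]]] [Gt'|[i' [m' [? ? ey']]]]; subst.
    + exact: h4 Gt Gt'.
    + by exfalso; have [_ Sy] := h1 _ _ _ Gt; move: Sy; apply: nSe.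
    + by exfalso; have [_ Sy] := h1 _ _ _ Gt'; move: Sy; apply: nSe.
    + by match goal with H : e _ = e _ |- _ => move/einj/pinj: H => [-> ->] end.
have SGinf : infinite_set (S G).
  move=> SGfin; apply: Ainf; apply: (sub_finite_set (B := S G `|` (A `\` S G))).
    by move=> x Ax; have [Sx|nSx] := pselect (S G x); [left|right].
  by rewrite finite_setU; split.
have [z0 Sz0] := infinite_setN0 SGinf.
have /pcard_injP [c cinj] := finite_set_countable finF.
have [g gG] : {g : T * nat -> T & forall p, S G p.1 -> G (p.1, p.2, g p)}.
  apply: (@choice _ _ (fun p y => S G p.1 -> G (p.1, p.2, y))) => -[x n] /=.
  have [Sx|nSx] := pselect (S G x); last by exists x.
  by have [y Gy] := h2 x Sx n; exists y.
pose f x n := if pselect (S G x) then g (x, n.*2) else g (z0, (pickle (c x, n)).*2.+1).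
have pinj : injective (@pickle (nat * nat)%type) := pcan_inj (@pickleK _).
exists f; split.
  move=> x n Ax; rewrite /f; case: pselect => Sx.
    by have [_ Sg] := h1 _ _ _ (gG (x, n.*2) Sx); exact: SA _ Sg.
  by have [_ Sg] := h1 _ _ _ (gG (z0, (pickle (c x, n)).*2.+1) Sz0); exact: SA _ Sg.
move=> x n x' n' Ax Ax'; rewrite /f.
case: pselect => Sx; case: pselect => Sx' /= eq.
- have G1 := gG (x, n.*2) Sx; have G2 := gG (x', n'.*2) Sx'.
  rewrite /= eq in G1; have [-> /eqP] := h4 _ _ _ _ _ G1 G2.
  by rewrite -!muln2 eqn_pmul2r // => /eqP ->.
- have G1 := gG (x, n.*2) Sx; have G2 := gG (z0, (pickle (c x', n')).*2.+1) Sz0.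
  rewrite /= eq in G1; have [_ /(congr1 odd)] := h4 _ _ _ _ _ G1 G2.
  by move=> /=; rewrite ?odd_double /=.
- have G1 := gG (z0, (pickle (c x, n)).*2.+1) Sz0; have G2 := gG (x', n'.*2) Sx'.
  rewrite /= eq in G1; have [_ /(congr1 odd)] := h4 _ _ _ _ _ G1 G2.
  by move=> /=; rewrite ?odd_double /=.
- have G1 := gG (z0, (pickle (c x, n)).*2.+1) Sz0.
  have G2 := gG (z0, (pickle (c x', n')).*2.+1) Sz0.
  rewrite /= eq in G1; have [_ [/eqP]] := h4 _ _ _ _ _ G1 G2.
  rewrite -!muln2 eqn_pmul2r // => /eqP /pinj [cx ->]; split => //.
  by apply: cinj => //; rewrite inE.
Qed.

Local Open Scope order_scope.
Set Implicit Arguments. Unset Strict Implicit.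

Definition sepr d (X : orderType d) (r : nat) (a b : X) :=
  exists f : 'I_r -> X, injective f /\ forall i, a < f i /\ f i < b.
Arguments sepr {d X} r a b.

Lemma min_idx d (X : orderType d) (e : nat -> X) n :
  exists m, (m <= n)%N /\ forall i, (i <= n)%N -> e m <= e i.
Proof.
elim: n => [|n [m [mn hm]]].
  by exists 0%N; split => // i; rewrite leqn0 => /eqP ->.
case: (leP (e m) (e n.+1)) => h.
  exists m; split; first by apply: leq_trans mn _.
  move=> i; rewrite leq_eqVlt ltnS => /orP [/eqP ->|] //; exact: hm.
exists n.+1; split => // i; rewrite leq_eqVlt ltnS => /orP [/eqP ->|/hm] //.
by apply: le_trans; apply: ltW.
Qed.

Lemma max_idx d (X : orderType d) (e : nat -> X) n :
  exists m, (m <= n)%N /\ forall i, (i <= n)%N -> e i <= e m.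
Proof.
elim: n => [|n [m [mn hm]]].
  by exists 0%N; split => // i; rewrite leqn0 => /eqP ->.
case: (leP (e n.+1) (e m)) => h.
  exists m; split; first by apply: leq_trans mn _.
  move=> i; rewrite leq_eqVlt ltnS => /orP [/eqP ->|] //; exact: hm.
exists n.+1; split => // i; rewrite leq_eqVlt ltnS => /orP [/eqP ->|/hm] //.
by move=> hi; apply: le_trans hi _; apply: ltW.
Qed.

Lemma bump_le_r (m r : nat) (i : 'I_r) : (bump m i <= r)%N.
Proof. have := ltn_ord i; rewrite /bump; case: (m <= i)%N => h; [rewrite add1n; exact: h | rewrite add0n; exact: ltnW]. Qed.

Lemma bump_inj_ord (m r : nat) : injective (fun i : 'I_r => bump m i).
Proof. by move=> i j /(congr1 (unbump m)); rewrite !bumpK => /val_inj. Qed.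

Lemma finL d (X : orderType d) (r : nat) (y : X) :
  finite_set [set x | x < y /\ ~ sepr r x y].
Proof.
apply: contrapT => /inf_seq [e [eL einj]].
have [m [mr hm]] := min_idx e r.
apply: (eL m).2; exists (fun i => e (bump m i)); split.
  by move=> i j /einj /bump_inj_ord.
move=> i; split; last exact: (eL _).1.
rewrite lt_neqAle hm ?bump_le_r // andbT.
by apply/eqP => /einj /eqP; rewrite (negbTE (neq_bump _ _)).
Qed.

Lemma finR d (X : orderType d) (r : nat) (y : X) :
  finite_set [set x | y < x /\ ~ sepr r y x].
Proof.
apply: contrapT => /inf_seq [e [eL einj]].
have [m [mr hm]] := max_idx e r.
apply: (eL m).2; exists (fun i => e (bump m i)); split.
  by move=> i j /einj /bump_inj_ord.
move=> i; split; first exact: (eL _).1.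
rewrite lt_neqAle hm ?bump_le_r // andbT.
by apply/eqP => /einj /eqP; rewrite eq_sym (negbTE (neq_bump _ _)).
Qed.

Lemma subsing_finite T (M : set T) : (forall a b, M a -> M b -> a = b) -> finite_set M.
Proof.
move=> h; have [[a Ma]|na] := pselect (exists a, M a).
  apply: (sub_finite_set (B := [set a])); last exact: finite_set1.
  by move=> b Mb; rewrite /= (h _ _ Mb Ma).
apply: (sub_finite_set (B := set0)); last exact: finite_set0.
by move=> b Mb; apply: na; exists b.
Qed.

Theorem fact3p2 (d : Order.disp_t) (X : orderType d) (r : nat) :
  infinite_set [set: X] -> (0 < r)%N ->
  exists Y : set X, Y #= [set: X] /\
    forall y1 y2 : X, Y y1 -> Y y2 -> y1 < y2 ->
      exists (x1 x2 x3 : 'I_r -> X),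
        [/\ injective x1, injective x2, injective x3 &
          forall i : 'I_r, [/\ x1 i < y1, y1 < x2 i, x2 i < y2 & y2 < x3 i]].
Proof.
move=> Xinf r0.
pose Sep (Y : set X) := forall a b, Y a -> Y b -> a < b -> sepr r a b.
have [Y [SY Ymax]] : exists Y, Sep Y /\ forall B, Y `<` B -> ~ Sep B.
  apply: Zorn_bigcup => F FS Ftot a b [X1 F1 X1a] [X2 F2 X2b] ab.
  have [s|s] := Ftot _ _ F1 F2.
    exact: (FS X2 F2 _ _ (s _ X1a) X2b ab).
  exact: (FS X1 F1 _ _ X1a (s _ X2b) ab).
pose N (y : X) := [set y] `|` [set x | x < y /\ ~ sepr r x y]
                  `|` [set x | y < x /\ ~ sepr r y x].
have Nfin y : finite_set (N y).
  rewrite !finite_setU; split; [split; [exact: finite_set1 | exact: finL] | exact: finR].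
have cover x : exists y, Y y /\ N y x.
  have [Yx|nYx] := pselect (Y x); first by exists x; split=> //; left; left.
  apply: contrapT => H.
  apply: (Ymax (Y `|` [set x])).
    split; first by move=> z Yz; left.
    by move=> sub; apply: nYx; apply: sub; right.
  move=> a b [Ya|->] [Yb|->] ab.
  - exact: SY.
  - apply: contrapT => ns; apply: H; exists a; split=> //; right; by split.
  - apply: contrapT => ns; apply: H; exists b; split=> //; left; right; by split.
  - by rewrite ltxx in ab.
have Yinf : infinite_set Y.
  move=> Yfin; apply: Xinf.
  apply: (sub_finite_set (B := \bigcup_(y in Y) N y)); last exact: bigcup_finite.
  by move=> x _; have [y [Yy Nyx]] := cover x; exists y.
pose Y' := [set y | Y y /\ (exists a, Y a /\ a < y) /\ (exists b, Y b /\ y < b)].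
have noY1 z : Y z -> ~ Y' z -> (exists b, Y b /\ z < b) -> forall a, Y a -> ~ a < z.
  by move=> Yz nY' hb a Ya az; apply: nY'; split => //; split => //; exists a.
have noY2 z : Y z -> ~ Y' z -> (exists a, Y a /\ a < z) -> forall b, Y b -> ~ z < b.
  by move=> Yz nY' ha b Yb zb; apply: nY'; split => //; split => //; exists b.
have Y'inf : infinite_set Y'.
  pose Mn := [set y | Y y /\ forall a, Y a -> ~ a < y].
  pose Mx := [set y | Y y /\ forall b, Y b -> ~ y < b].
  apply: (sub_infinite_set (A := Y `\` (Mn `|` Mx))); last first.
    apply: infinite_setD => //; rewrite finite_setU; split; apply: subsing_finite.
      move=> a b [Ya ha] [Yb hb]; case: (ltgtP a b) => // ab.
        by exfalso; apply: (hb a).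
      by exfalso; apply: (ha b).
    move=> a b [Ya ha] [Yb hb]; case: (ltgtP a b) => // ab.
      by exfalso; apply: (ha b).
    by exfalso; apply: (hb a).
  move=> y [Yy nM]; split => //; split.
    apply: contrapT => h; apply: nM; left; split => // a Ya ay; apply: h; by exists a.
  apply: contrapT => h; apply: nM; right; split => // b Yb yb; apply: h; by exists b.
have [fY [fYY fYinj]] := @absorb _ _ Yinf.
have [fY' [fY'Y fY'inj]] := @absorb _ _ Y'inf.
have [y0 Y'y0] := infinite_setN0 Y'inf.
have [yof yofP] := choice cover.
have [cN cNP] : {cN : X -> X -> nat & forall y, {in N y &, injective (cN y)}}.
  apply: (@choice _ _ (fun y c => {in N y &, injective c})) => y.
  have /pcard_injP [c ci] := finite_set_countable (Nfin y).
  by exists c.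
pose h1 x := fY (yof x) (cN (yof x) x).
pose k y := if pselect (Y' y) then fY' y 0%N
            else fY' y0 (if y < y0 then 1%N else 2%N).
have h1Y x : Y (h1 x) by apply: fYY; exact: (yofP x).1.
have h1inj : injective h1.
  move=> x x' e.
  have [e1 e2] := fYinj _ _ _ _ (yofP x).1 (yofP x').1 e.
  have N1 := (yofP x).2; have N2 := (yofP x').2.
  rewrite -e1 in N2 e2.
  by apply: (cNP (yof x)) => //; rewrite inE.
have kY' y : Y' (k y).
  by rewrite /k; case: pselect => hy; apply: fY'Y.
have kinj y y' : Y y -> Y y' -> k y = k y' -> y = y'.
  move=> Yy Yy'; rewrite /k; case: pselect => hy; case: pselect => hy' /= e.
  - by have [] := fY'inj _ _ _ _ hy hy' e.
  - by have [_] := fY'inj _ _ _ _ hy Y'y0 e; case: (_ < _).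
  - by have [_] := fY'inj _ _ _ _ Y'y0 hy' e; case: (_ < _).
  - have [_] := fY'inj _ _ _ _ Y'y0 Y'y0 e.
    have Y0 := Y'y0.1.
    have ne1 : y != y0 by apply/eqP => eq; apply: hy; rewrite eq.
    have ne2 : y' != y0 by apply/eqP => eq; apply: hy'; rewrite eq.
    case: (ltP y y0) => l1; case: (ltP y' y0) => l2 // _.
      have n1 := noY1 _ Yy hy (ex_intro _ y0 (conj Y0 l1)).
      have n2 := noY1 _ Yy' hy' (ex_intro _ y0 (conj Y0 l2)).
      case: (ltgtP y y') => // yy; [by exfalso; apply: (n2 y) | by exfalso; apply: (n1 y')].
    have g1 : y0 < y by rewrite lt_neqAle eq_sym ne1 l1.
    have g2 : y0 < y' by rewrite lt_neqAle eq_sym ne2 l2.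
    have n1 := noY2 _ Yy hy (ex_intro _ y0 (conj Y0 g1)).
    have n2 := noY2 _ Yy' hy' (ex_intro _ y0 (conj Y0 g2)).
    case: (ltgtP y y') => // yy; [by exfalso; apply: (n1 y') | by exfalso; apply: (n2 y)].
have card : [set: X] #<= Y'.
  have : $|{injfun [set: X] >-> Y'}|.
    apply/injfunPex; exists (fun x => k (h1 x)).
      by move=> x _; exact: kY'.
    by move=> x x' _ _ e; apply: h1inj; exact: kinj (h1Y x) (h1Y x') e.
  by case=> g; exact: inj_card_le g.
exists Y'; split.
  by apply/card_eqPle; split; [exact: card_leT | exact: card].
move=> y1 y2 [Y1 [[a [Ya ay1]] _]] [Y2 [_ [b [Yb y2b]]]] y12.
have [x1 [i1 p1]] := SY _ _ Ya Y1 ay1.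
have [x2 [i2 p2]] := SY _ _ Y1 Y2 y12.
have [x3 [i3 p3]] := SY _ _ Y2 Yb y2b.
exists x1, x2, x3; split => // i.
by have [? ?] := p1 i; have [? ?] := p2 i; have [? ?] := p3 i.
Qed.
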